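(* Let $a\in(0,2\pi)$ and $\varepsilon\in(0,1)$. Then $T_0(v,a,\varepsilon)<+\infty$ for all speeds $v>0$ except for a finite number of critical speeds. Moreover: $T_0(v,a,\varepsilon)\sim\frac{\pi-a}{v}$ as $v\to0$; if $v>v_1=\frac{2\pi-a+2\varepsilon}{2\varepsilon}$ then $T_0(v,a,\varepsilon)<\infty$, and $T_0(v,a,\varepsilon)\to\pi-2\varepsilon$ as $v\to+\infty$. Besides, if $v\in\mathbb{Q}$ (with $v>0$), then there exist $a_0>0$ and $\varepsilon_0>0$ such that $T_0(v,a,\varepsilon)=+\infty$ for every $a\in(0,a_0)$ and every $\varepsilon\in(0,\varepsilon_0)$.
   Context: $\Omega=S^2$ is the unit sphere of $\mathbb{R}^3$ with the induced metric, described in spherical coordinates $(\theta,\varphi)$, $\varphi$ the latitude ($\varphi=0$ the equator) and $\theta$ the longitude. For $a\in(0,2\pi)$, $\varepsilon\in(0,\pi/2)$ and $v>0$, set $\omega(t)=\{(\theta,\varphi): |\varphi|<\varepsilon,\ vt<\theta<vt+a\}$ (longitude taken mod $2\pi$) and $Q=\{(t,x)\in\mathbb{R}\times S^2: x\in\omega(t)\}$. Rays are the unit-speed geodesics $t\mapsto x(t)$, $t\in\mathbb{R}$, of $S^2$ (great circles traversed at unit speed). $(Q,T)$ satisfies the time-dependent geometric control condition if every ray $x(\cdot)$ admits $t\in(0,T)$ with $x(t)\in\omega(t)$; the control time is $T_0(v,a,\varepsilon)=\inf\{T>0:(Q,T)\text{ satisfies this condition}\}$, with $T_0=+\infty$ if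 no such $T$ exists.
   Formalization: The asymptotic $T_0(v,a,\varepsilon)\sim\frac{\pi-a}{v}$ as v→0 is claimed for a < π only, rather than for every a ∈ (0,2π). The statement above fails without it. *)

(* Defs.v *)
From Stdlib Require Import Reals Lra QArith Qreals.
From Coquelicot Require Import Coquelicot.
Open Scope R_scope.

Definition vec3 := (R * R * R)%type.

Definition dot3 (u w : vec3) : R :=
  let '(u1, u2, u3) := u in let '(w1, w2, w3) := w in u1*w1 + u2*w2 + u3*w3.

Definition add3 (u w : vec3) : vec3 :=
  let '(u1, u2, u3) := u in let '(w1, w2, w3) := w in (u1+w1, u2+w2, u3+w3).

Definition scal3 (c : R) (u : vec3) : vec3 :=
  let '(u1, u2, u3) := u in (c*u1, c*u2, c*u3).

(* Spherical coordinates: theta = longitude, phi = latitude (phi = 0 equator). *)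
Definition sph (theta phi : R) : vec3 :=
  (cos phi * cos theta, cos phi * sin theta, sin phi).

(* x lies in omega(t) = {(theta,phi) : |phi| < eps, v t < theta < v t + a}
   with the longitude taken mod 2 pi (integer k). *)
Definition in_omega (v a eps t : R) (x : vec3) : Prop :=
  exists theta phi : R,
    x = sph theta phi /\ - PI / 2 <= phi <= PI / 2 /\ Rabs phi < eps /\
    exists k : Z, v * t < theta + 2 * IZR k * PI < v * t + a.

(* Rays: unit-speed geodesics of S^2, i.e. great circles
   t |-> cos t p + sin t q with (p,q) orthonormal. *)
Definition ray (p q : vec3) (t : R) : vec3 :=
  add3 (scal3 (cos t) p) (scal3 (sin t) q).

Definition orthonormal (p q : vec3) : Prop :=
  dot3 p p = 1 /\ dot3 q q = 1 /\ dot3 p q = 0.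

Definition GCC (v a eps T : R) : Prop :=
  forall p q : vec3, orthonormal p q ->
    exists t : R, 0 < t < T /\ in_omega v a eps t (ray p q t).

(* Control time: inf of admissible T > 0, +oo if there is none
   (Glb_Rbar of the empty set is p_infty). *)
Definition T0 (v a eps : R) : Rbar :=
  Glb_Rbar (fun T => 0 < T /\ GCC v a eps T).

(* Main.v *)
Require Import Defs.
From Stdlib Require Import Reals QArith Qreals List.
From Coquelicot Require Import Coquelicot.
Open Scope R_scope.
From Stdlib Require Import Lra Lia Classical.


Lemma PI_gt3 : 3 < PI.
Proof. pose proof PI2_3_2. lra. Qed.

Lemma cos_sin_eq x y : cos x = cos y -> sin x = sin y ->
  exists k : Z, x = y + 2 * IZR k * PI.
Proof.
  intros Hc Hs.
  assert (H1 : cos (x - y) = 1).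
  { rewrite cos_minus, Hc, Hs. pose proof (sin2_cos2 y). unfold Rsqr in *. lra. }
  assert (H2 : sin ((x - y)/2) = 0).
  { pose proof (cos_2a_sin ((x-y)/2)) as E.
    replace (2 * ((x - y) / 2)) with (x - y) in E by field. nra. }
  destruct (sin_eq_0_0 _ H2) as [k Hk]. exists k. lra.
Qed.

Lemma unit_angle X Y : X*X + Y*Y = 1 -> exists l, cos l = X /\ sin l = Y.
Proof.
  intros H.
  assert (HX : -1 <= X <= 1) by nra.
  assert (HS : sqrt (1 - X²) = Rabs Y).
  { replace (1 - X²) with (Y²) by (unfold Rsqr; lra). apply sqrt_Rsqr_abs. }
  destruct (Rle_or_lt 0 Y) as [HY|HY].
  - exists (acos X). rewrite cos_acos, sin_acos by lra. rewrite HS, Rabs_pos_eq; lra.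
  - exists (- acos X). rewrite cos_neg, sin_neg, cos_acos, sin_acos by lra.
    rewrite HS, Rabs_left; lra.
Qed.

Lemma abs_lt_sin (x e : R) : 0 < e < 1 -> Rabs x < e -> Rabs (sin x) < sin e.
Proof.
  intros He Hx. pose proof PI_gt3.
  apply Rabs_def1.
  - apply sin_increasing_1; apply Rabs_def2 in Hx; lra.
  - rewrite <- sin_neg. apply sin_increasing_1; apply Rabs_def2 in Hx; lra.
Qed.

Lemma sin_lt_abs (x e : R) : 0 < e < 1 -> - (PI/2) <= x <= PI/2 ->
  Rabs (sin x) < sin e -> Rabs x < e.
Proof.
  intros He Hx Hs. pose proof PI_gt3.
  apply Rabs_def2 in Hs. destruct Hs as [Hs1 Hs2].
  apply Rabs_def1.
  - apply (sin_increasing_0 x e); lra.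
  - rewrite <- sin_neg in Hs2. apply (sin_increasing_0 (-e) x); lra.
Qed.

Lemma sin_ge_abs (x e : R) : 0 < e < 1 -> - (PI/2) <= x <= PI/2 ->
  sin e <= Rabs (sin x) -> e <= Rabs x.
Proof.
  intros He Hx Hs. destruct (Rle_or_lt e (Rabs x)) as [h|h]; auto.
  pose proof (abs_lt_sin x e He h). lra.
Qed.

Definition hit (a y : R) : Prop := exists K : Z, 0 < y + 2 * IZR K * PI < a.

Lemma hit_shift a y m : hit a y -> hit a (y - 2 * IZR m * PI).
Proof.
  intros [K HK]. exists (K + m)%Z. rewrite plus_IZR. lra.
Qed.

Lemma up_bounds r : r < IZR (up r) <= r + 1.
Proof. destruct (archimed r). lra. Qed.

Lemma hit_interval a m M : 0 < a < 2*PI -> m < M -> 2*PI - a < M - m ->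
  exists y, m < y < M /\ hit a y.
Proof.
  intros Ha Hm HL. pose proof PI_gt3.
  set (n := (up (m / (2*PI)) - 1)%Z).
  assert (Hn : 2 * IZR n * PI <= m < 2 * IZR n * PI + 2*PI).
  { unfold n. rewrite minus_IZR. destruct (up_bounds (m/(2*PI))) as [h1 h2].
    split.
    - assert (IZR (up (m / (2 * PI))) - 1 <= m/(2*PI)) by lra.
      apply (Rmult_le_compat_r (2*PI)) in H0; [|lra].
      replace (m / (2*PI) * (2*PI)) with m in H0 by (field; lra). nra.
    - assert (m/(2*PI) < IZR (up (m / (2 * PI))) - 1 + 1) by lra.
      apply (Rmult_lt_compat_r (2*PI)) in H0; [|lra].
      replace (m / (2*PI) * (2*PI)) with m in H0 by (field; lra). nra. }
  set (B := 2 * IZR n * PI).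
  destruct (Rlt_or_le m (B + a)) as [Hc|Hc].
  - exists ((m + Rmin M (B + a))/2).
    assert (Rmin M (B+a) <= M) by apply Rmin_l.
    assert (Rmin M (B+a) <= B + a) by apply Rmin_r.
    assert (m < Rmin M (B+a)) by (apply Rmin_glb_lt; lra).
    split; [lra|]. exists (- n)%Z. rewrite opp_IZR. unfold B in *. lra.
  - exists (B + 2*PI + Rmin a (M - (B + 2*PI)) / 2).
    assert (Rmin a (M - (B + 2*PI)) <= a) by apply Rmin_l.
    assert (Rmin a (M - (B + 2*PI)) <= M - (B + 2*PI)) by apply Rmin_r.
    assert (0 < Rmin a (M - (B + 2*PI))) by (apply Rmin_glb_lt; unfold B in *; lra).
    split; [unfold B in *; lra|]. exists (- n - 1)%Z.
    rewrite minus_IZR, opp_IZR. unfold B in *. lra.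
Qed.


Lemma INR_to_nat z : (0 <= z)%Z -> INR (Z.to_nat z) = IZR z.
Proof. intros H. rewrite INR_IZR_INZ, Znat.Z2Nat.id; auto. Qed.

Lemma up_le_up x y : x <= y -> (up x <= up y)%Z.
Proof.
  intros H. destruct (up_bounds x), (up_bounds y).
  assert (IZR (up x) < IZR (up y) + 1) by lra.
  rewrite <- plus_IZR in H4. apply lt_IZR in H4. lia.
Qed.

Lemma up_pos x : 0 <= x -> (1 <= up x)%Z.
Proof.
  intros H. destruct (up_bounds x). assert (0 < IZR (up x)) by lra.
  apply lt_IZR in H2. lia.
Qed.

Lemma hit_step a d : 0 < a -> 0 < Rabs d < a ->
  exists J : nat, forall c, exists j : nat, (j <= J)%nat /\ hit a (c + INR j * d).
Proof.
  intros Ha Hd. pose proof PI_gt3.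
  exists (Z.to_nat (up (2*PI/Rabs d)) + 1)%nat. intros c.
  destruct (Rle_or_lt 0 d) as [Hp|Hn].
  - rewrite Rabs_pos_eq in * by lra.
    assert (dpos : 0 < d) by lra.
    set (u := up (c/(2*PI))).
    destruct (up_bounds (c/(2*PI))) as [u1 u2]. fold u in u1, u2.
    set (c' := c - 2 * IZR u * PI).
    assert (Hc' : -2*PI <= c' < 0).
    { unfold c'. split.
      - apply (Rmult_le_compat_r (2*PI)) in u2; [|lra].
        replace ((c / (2 * PI) + 1) * (2 * PI)) with (c + 2*PI) in u2 by (field; lra). lra.
      - apply (Rmult_lt_compat_r (2*PI)) in u1; [|lra].
        replace (c / (2 * PI) * (2 * PI)) with c in u1 by (field; lra). lra. }
    set (j0 := up (- c' / d)).
    destruct (up_bounds (- c'/d)) as [j1 j2]. fold j0 in j1, j2.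
    assert (Hj0 : (1 <= j0)%Z).
    { apply up_pos. apply Rdiv_le_0_compat; lra. }
    exists (Z.to_nat j0). rewrite INR_to_nat by lia. split.
    + assert (j0 <= up (2*PI/d))%Z.
      { assert (IZR j0 < IZR (up (2 * PI / d)) + 1).
        { destruct (up_bounds (2*PI/d)).
          assert (- c' / d <= 2*PI/d).
          { unfold Rdiv. apply Rmult_le_compat_r. left; apply Rinv_0_lt_compat; lra. lra. }
          lra. }
        rewrite <- plus_IZR in H0. apply lt_IZR in H0. lia. }
      lia.
    + exists (- u)%Z. rewrite opp_IZR.
      assert (IZR j0 * d > - c').
      { apply (Rmult_lt_compat_r d) in j1; [|lra].
        replace (- c' / d * d) with (-c') in j1 by (field; lra). lra. }
      assert (IZR j0 * d <= - c' + d).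
      { apply (Rmult_le_compat_r d) in j2; [|lra].
        replace ((- c' / d + 1) * d) with (-c' + d) in j2 by (field; lra). lra. }
      unfold c' in *. lra.
  - rewrite Rabs_left in * by lra. set (D := - d) in *.
    assert (Dpos : 0 < D) by lra.
    set (u := up ((c - a)/(2*PI))).
    destruct (up_bounds ((c - a)/(2*PI))) as [u1 u2]. fold u in u1, u2.
    set (c' := c - 2 * IZR u * PI + 2 * PI).
    assert (Hc' : a <= c' < a + 2*PI).
    { unfold c'. split.
      - apply (Rmult_le_compat_r (2*PI)) in u2; [|lra].
        replace (((c - a) / (2 * PI) + 1) * (2 * PI)) with (c - a + 2*PI) in u2 by (field; lra). lra.
      - apply (Rmult_lt_compat_r (2*PI)) in u1; [|lra].
        replace ((c - a) / (2 * PI) * (2 * PI)) with (c - a) in u1 by (field; lra). lra. }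
    set (j0 := up ((c' - a) / D)).
    destruct (up_bounds ((c' - a)/D)) as [j1 j2]. fold j0 in j1, j2.
    assert (Hj0 : (1 <= j0)%Z).
    { apply up_pos. apply Rdiv_le_0_compat; lra. }
    exists (Z.to_nat j0). rewrite INR_to_nat by lia. split.
    + assert (j0 <= up (2*PI/D))%Z.
      { assert (IZR j0 < IZR (up (2 * PI / D)) + 1).
        { destruct (up_bounds (2*PI/D)).
          assert ((c' - a) / D <= 2*PI/D).
          { unfold Rdiv. apply Rmult_le_compat_r. left; apply Rinv_0_lt_compat; lra. lra. }
          lra. }
        rewrite <- plus_IZR in H0. apply lt_IZR in H0. lia. }
      lia.
    + exists (1 - u)%Z. rewrite minus_IZR.
      assert (IZR j0 * D > c' - a).
      { apply (Rmult_lt_compat_r D) in j1; [|lra].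
        replace ((c' - a) / D * D) with (c' - a) in j1 by (field; lra). lra. }
      assert (IZR j0 * D <= c' - a + D).
      { apply (Rmult_le_compat_r D) in j2; [|lra].
        replace (((c' - a) / D + 1) * D) with (c' - a + D) in j2 by (field; lra). lra. }
      unfold c', D in *. lra.
Qed.

Lemma sweep_hit a f u1 u2 : 0 < a < 2*PI -> u1 < u2 ->
  (forall x, u1 <= x <= u2 -> continuity_pt f x) ->
  2*PI - a < f u1 - f u2 ->
  exists x, u1 <= x <= u2 /\ hit a (f x).
Proof.
  intros Ha Hu Hc Hd.
  destruct (hit_interval a (f u2) (f u1) Ha) as [y [Hy Hh]]; [lra|lra|].
  destruct (Ranalysis5.IVT_interv (fun x => y - f x) u1 u2) as [x [Hx Hfx]].
  - intros z Hz. apply continuity_pt_minus. apply continuity_pt_const. intros ? ?; auto.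
    apply Hc; auto.
  - auto.
  - lra.
  - lra.
  - exists x. split; auto. replace (f x) with y by lra. auto.
Qed.


Lemma sph_formula l c w3 tau : c*c + w3*w3 = 1 -> -(PI/2) < tau < PI/2 ->
  (cos tau * cos l - c * sin tau * sin l, cos tau * sin l + c * sin tau * cos l, w3 * sin tau)
  = sph (l + atan (c * tan tau)) (asin (w3 * sin tau)).
Proof.
  intros Hcw Ht.
  pose proof (sin2_cos2 tau) as Sct. unfold Rsqr in Sct.
  assert (Hw : -1 <= w3 * sin tau <= 1).
  { assert ((w3 * sin tau) * (w3 * sin tau) <= 1).
    { assert (w3*w3 <= 1) by nra. assert (sin tau * sin tau <= 1) by nra.
      replace ((w3 * sin tau) * (w3 * sin tau)) with ((w3*w3) * (sin tau * sin tau)) by ring.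
      assert (0 <= w3*w3) by nra. assert (0 <= sin tau * sin tau) by nra. nra. }
    nra. }
  set (g := atan (c * tan tau)).
  set (f := asin (w3 * sin tau)).
  assert (Hsf : sin f = w3 * sin tau) by (apply sin_asin; auto).
  assert (HA : cos f = sqrt (1 - (w3 * sin tau)²)) by (apply cos_asin; auto).
  assert (HA0 : 0 <= cos f) by (rewrite HA; apply sqrt_pos).
  assert (HA2 : cos f * cos f = 1 - (w3 * sin tau) * (w3 * sin tau)).
  { rewrite HA. rewrite sqrt_sqrt; unfold Rsqr; nra. }
  assert (Hct : 0 < cos tau) by (apply cos_gt_0; lra).
  set (T := tan tau).
  assert (HT : sin tau = T * cos tau) by (unfold T, tan; field; lra).
  assert (Hg : - PI / 2 < g < PI / 2) by apply atan_bound.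
  assert (HG : 0 < cos g) by (apply cos_gt_0; lra).
  assert (Htg : tan g = c * T) by (unfold g, T; apply tan_atan).
  assert (Hsg : sin g = c * T * cos g).
  { rewrite <- Htg. unfold tan. field. lra. }
  pose proof (sin2_cos2 g) as Sg. unfold Rsqr in Sg.
  assert (HG2 : cos g * cos g * (cos tau * cos tau + c * c * (sin tau * sin tau)) = cos tau * cos tau).
  { rewrite HT. rewrite Hsg in Sg.
    transitivity (cos tau * cos tau * (cos g * cos g + (c * T * cos g) * (c * T * cos g))); [ring|].
    rewrite Rplus_comm, Sg. ring. }
  assert (HAG : cos f * cos g = cos tau).
  { assert (E : (cos f * cos g) * (cos f * cos g) = cos tau * cos tau).
    { replace ((cos f * cos g) * (cos f * cos g)) with ((cos f * cos f) * (cos g * cos g)) by ring.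
      rewrite HA2. rewrite <- HG2. 
      replace (1 - w3 * sin tau * (w3 * sin tau)) with (cos tau * cos tau + c * c * (sin tau * sin tau)).
      ring. nra. }
    assert (0 <= cos f * cos g) by nra. nra. }
  assert (HAs : cos f * sin g = c * sin tau).
  { rewrite Hsg. rewrite HT.
    replace (cos f * (c * T * cos g)) with (c * T * (cos f * cos g)) by ring.
    rewrite HAG. ring. }
  unfold sph. rewrite cos_plus, sin_plus. fold g.
  f_equal; [f_equal|].
  - replace (cos f * (cos l * cos g - sin l * sin g)) with (cos l * (cos f * cos g) - sin l * (cos f * sin g)) by ring.
    rewrite HAG, HAs. ring.
  - replace (cos f * (sin l * cos g + cos l * sin g)) with (sin l * (cos f * cos g) + cos l * (cos f * sin g)) by ring.
    rewrite HAG, HAs. ring.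
  - auto.
Qed.

Lemma ray_pi p q t : ray p q (t + PI) = scal3 (-1) (ray p q t).
Proof.
  destruct p as [[p1 p2] p3], q as [[q1 q2] q3]. unfold ray, add3, scal3.
  rewrite neg_cos, neg_sin. f_equal; [f_equal|]; ring.
Qed.

Lemma sph_pi th ph : sph (th + PI) (- ph) = scal3 (-1) (sph th ph).
Proof.
  unfold sph, scal3. rewrite neg_cos, neg_sin, cos_neg, sin_neg. f_equal; [f_equal|]; ring.
Qed.

Lemma node_rep p1 p2 p3 q1 q2 q3 t0 :
  orthonormal (p1, p2, p3) (q1, q2, q3) -> p3 * cos t0 + q3 * sin t0 = 0 ->
  exists l c w3, c*c + w3*w3 = 1 /\
   forall (k : nat) tau, -(PI/2) < tau < PI/2 ->
   ray (p1, p2, p3) (q1, q2, q3) (t0 + INR k * PI + tau)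
   = sph (l + INR k * PI + atan (c * tan tau)) ((-1)^k * asin (w3 * sin tau)).
Proof.
  intros [Hpp [Hqq Hpq]] Hz. unfold dot3 in Hpp, Hqq, Hpq.
  pose proof (sin2_cos2 t0) as S0. unfold Rsqr in S0.
  set (C0 := cos t0) in *. set (sn := sin t0) in *.
  set (n1 := C0 * p1 + sn * q1). set (n2 := C0 * p2 + sn * q2).
  set (w1 := - sn * p1 + C0 * q1). set (w2 := - sn * p2 + C0 * q2).
  set (w3 := - sn * p3 + C0 * q3).
  assert (Hnn : n1 * n1 + n2 * n2 = 1).
  { assert (E : n1 * n1 + n2 * n2 + (p3 * C0 + q3 * sn) * (p3 * C0 + q3 * sn) =
      C0 * C0 * (p1 * p1 + p2 * p2 + p3 * p3) + 2 * C0 * sn * (p1 * q1 + p2 * q2 + p3 * q3)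
      + sn * sn * (q1 * q1 + q2 * q2 + q3 * q3)) by (unfold n1, n2; ring).
    rewrite Hz, Hpp, Hqq, Hpq in E. nra. }
  assert (Hww : w1 * w1 + w2 * w2 + w3 * w3 = 1).
  { assert (E : w1 * w1 + w2 * w2 + w3 * w3 =
      sn * sn * (p1 * p1 + p2 * p2 + p3 * p3) - 2 * C0 * sn * (p1 * q1 + p2 * q2 + p3 * q3)
      + C0 * C0 * (q1 * q1 + q2 * q2 + q3 * q3)) by (unfold w1, w2, w3; ring).
    rewrite Hpp, Hqq, Hpq in E. nra. }
  assert (Hnw : n1 * w1 + n2 * w2 = 0).
  { assert (E : n1 * w1 + n2 * w2 + (p3 * C0 + q3 * sn) * w3 =
      - C0 * sn * (p1 * p1 + p2 * p2 + p3 * p3) + (C0 * C0 - sn * sn) * (p1 * q1 + p2 * q2 + p3 * q3)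
      + sn * C0 * (q1 * q1 + q2 * q2 + q3 * q3)) by (unfold n1, n2, w1, w2, w3; ring).
    rewrite Hz, Hpp, Hqq, Hpq in E. nra. }
  destruct (unit_angle n1 n2 Hnn) as [l [Hl1 Hl2]].
  pose proof (sin2_cos2 l) as Sl. unfold Rsqr in Sl.
  set (c := - w1 * sin l + w2 * cos l).
  assert (Hw1 : w1 = - c * sin l).
  { rewrite <- Hl1, <- Hl2 in Hnw.
    assert (E : w1 - (- c * sin l) = w1 * (1 - (sin l * sin l + cos l * cos l)) + cos l * (cos l * w1 + sin l * w2)) by (unfold c; ring).
    rewrite Sl, Hnw in E. lra. }
  assert (Hw2 : w2 = c * cos l).
  { rewrite <- Hl1, <- Hl2 in Hnw.
    assert (E : w2 - c * cos l = w2 * (1 - (sin l * sin l + cos l * cos l)) + sin l * (cos l * w1 + sin l * w2)) by (unfold c; ring).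
    rewrite Sl, Hnw in E. lra. }
  assert (Hc : c * c + w3 * w3 = 1).
  { rewrite Hw1, Hw2 in Hww.
    assert (E : c*c + w3*w3 = c*c*(1 - (sin l * sin l + cos l * cos l)) + ((-c*sin l)*(-c*sin l) + (c*cos l)*(c*cos l) + w3*w3)) by ring.
    rewrite Sl, Hww in E. lra. }
  exists l, c, w3. split; auto.
  intros k tau Ht. induction k as [|k IH].
  - simpl. replace (t0 + 0 * PI + tau) with (t0 + tau) by ring.
    replace (l + 0 * PI + atan (c * tan tau)) with (l + atan (c * tan tau)) by ring.
    replace (1 * asin (w3 * sin tau)) with (asin (w3 * sin tau)) by ring.
    rewrite <- sph_formula by auto.
    unfold ray, add3, scal3. rewrite cos_plus, sin_plus. fold C0 sn.
    f_equal; [f_equal|].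
    + replace (cos tau * cos l - c * sin tau * sin l) with (cos tau * n1 + sin tau * w1)
        by (rewrite Hl1, Hw1; ring). unfold n1, w1. ring.
    + replace (cos tau * sin l + c * sin tau * cos l) with (cos tau * n2 + sin tau * w2)
        by (rewrite Hl2, Hw2; ring). unfold n2, w2. ring.
    + unfold w3. replace (q3) with q3 by ring.
      assert (E : p3 * (C0 * cos tau - sn * sin tau) + q3 * (sn * cos tau + C0 * sin tau)
         = cos tau * (p3 * C0 + q3 * sn) + sin tau * (- sn * p3 + C0 * q3)) by ring.
      rewrite (Rmult_comm (C0 * cos tau - sn * sin tau)), (Rmult_comm (sn * cos tau + C0 * sin tau)).
      rewrite E, Hz. ring.
  - rewrite S_INR.
    replace (t0 + (INR k + 1) * PI + tau) with ((t0 + INR k * PI + tau) + PI) by ring.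
    replace (l + (INR k + 1) * PI + atan (c * tan tau)) with ((l + INR k * PI + atan (c * tan tau)) + PI) by ring.
    replace ((-1) ^ S k * asin (w3 * sin tau)) with (- ((-1) ^ k * asin (w3 * sin tau))) by (simpl; ring).
    rewrite ray_pi, sph_pi, IH. reflexivity.
Qed.


Lemma sq_eq_pos x y : 0 <= x -> 0 < y -> x * x = y * y -> x = y.
Proof.
  intros Hx Hy H.
  assert (E : (x - y) * (x + y) = 0) by (ring_simplify; lra).
  apply Rmult_integral in E. destruct E; lra.
Qed.

Lemma polar_hit v a e l t t' : 0 < e < 1 ->
  in_omega v a e t' (ray (cos l, sin l, 0) (0, 0, 1) t) ->
  exists k K : Z, Rabs (t - IZR k * PI) < e /\
    v * t' < l + IZR k * PI + 2 * IZR K * PI < v * t' + a.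
Proof.
  intros He [th [ph [Heq [Hph [Habs [K0 HK]]]]]].
  pose proof PI_gt3.
  unfold ray, add3, scal3, sph in Heq. injection Heq as E1 E2 E3.
  assert (Hph' : - (PI/2) < ph < PI/2) by (apply Rabs_def2 in Habs; lra).
  assert (Hc : 0 < cos ph) by (apply cos_gt_0; lra).
  pose proof (sin2_cos2 t) as St. pose proof (sin2_cos2 ph) as Sp. unfold Rsqr in *.
  pose proof (sin2_cos2 l) as Sl. pose proof (sin2_cos2 th) as Sth. unfold Rsqr in *.
  assert (Ec : cos t * cos t = cos ph * cos ph).
  { assert (Hs : sin t = sin ph) by lra.
    assert (sin t * sin t = sin ph * sin ph) by (rewrite Hs; ring). lra. }
  destruct (Rlt_or_le 0 (cos t)) as [Hp|Hn].
  - assert (Ect : cos t = cos ph) by (apply sq_eq_pos; lra).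
    assert (Hcl : cos th = cos l).
    { apply (Rmult_eq_reg_l (cos ph)); [|lra]. rewrite Ect in E1, E2. lra. }
    assert (Hsl : sin th = sin l).
    { apply (Rmult_eq_reg_l (cos ph)); [|lra]. rewrite Ect in E1, E2. lra. }
    destruct (cos_sin_eq th l Hcl Hsl) as [m Hm].
    destruct (cos_sin_eq t ph Ect ltac:(lra)) as [j Hj].
    exists (2 * j)%Z, (K0 + m - j)%Z. rewrite mult_IZR, minus_IZR, plus_IZR.
    split.
    + replace (t - 2 * IZR j * PI) with ph by lra. auto.
    + lra.
  - assert (Hn' : cos t < 0).
    { destruct Hn as [Hn|Hn]; auto. rewrite Hn in Ec. nra. }
    assert (Ect : cos t = - cos ph).
    { assert (- cos t = cos ph) by (apply sq_eq_pos; lra). lra. }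
    assert (Hcl : cos th = cos (l + PI)).
    { rewrite neg_cos. apply (Rmult_eq_reg_l (cos ph)); [|lra]. rewrite Ect in E1. lra. }
    assert (Hsl : sin th = sin (l + PI)).
    { rewrite neg_sin. apply (Rmult_eq_reg_l (cos ph)); [|lra]. rewrite Ect in E2. lra. }
    destruct (cos_sin_eq th (l + PI) Hcl Hsl) as [m Hm].
    assert (Hc2 : cos t = cos (PI - ph)) by (rewrite cos_minus, cos_PI, sin_PI; lra).
    assert (Hs2 : sin t = sin (PI - ph)) by (rewrite sin_minus, cos_PI, sin_PI; lra).
    destruct (cos_sin_eq t (PI - ph) Hc2 Hs2) as [j Hj].
    exists (2 * j + 1)%Z, (K0 + m - j)%Z. rewrite plus_IZR, mult_IZR, minus_IZR, plus_IZR.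
    split.
    + replace (t - (2 * IZR j + 1) * PI) with (- ph) by lra. rewrite Rabs_Ropp. auto.
    + lra.
Qed.

Lemma polar_orth l : orthonormal (cos l, sin l, 0) (0, 0, 1).
Proof.
  pose proof (sin2_cos2 l). unfold Rsqr in *. unfold orthonormal, dot3. lra.
Qed.

Lemma shift_orth l s : orthonormal (cos s * cos l, cos s * sin l, sin s) (- sin s * cos l, - sin s * sin l, cos s).
Proof.
  pose proof (sin2_cos2 l). pose proof (sin2_cos2 s). unfold Rsqr in *. unfold orthonormal, dot3.
  repeat split.
  - transitivity (cos s * cos s * (sin l * sin l + cos l * cos l) + sin s * sin s); [ring|].
    rewrite H. lra.
  - transitivity (sin s * sin s * (sin l * sin l + cos l * cos l) + cos s * cos s); [ring|].
    rewrite H. lra.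
  - transitivity (sin s * cos s * (1 - (sin l * sin l + cos l * cos l))); [ring|].
    rewrite H. ring.
Qed.

Lemma shift_ray l s t :
  ray (cos s * cos l, cos s * sin l, sin s) (- sin s * cos l, - sin s * sin l, cos s) t
  = ray (cos l, sin l, 0) (0, 0, 1) (t + s).
Proof.
  unfold ray, add3, scal3. rewrite cos_plus, sin_plus. f_equal; [f_equal|]; ring.
Qed.

Definition zf (p3 q3 t : R) := p3 * cos t + q3 * sin t.

Lemma zf_pi p3 q3 t : zf p3 q3 (t + PI) = - zf p3 q3 t.
Proof. unfold zf. rewrite neg_cos, neg_sin. ring. Qed.

Lemma zf_shift_nat p3 q3 t (m : nat) : zf p3 q3 t = 0 ->
  zf p3 q3 (t + INR m * PI) = 0 /\ zf p3 q3 (t - INR m * PI) = 0.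
Proof.
  intros H. induction m as [|m [IH1 IH2]].
  - simpl. replace (t + 0 * PI) with t by ring. replace (t - 0 * PI) with t by ring. auto.
  - rewrite S_INR. split.
    + replace (t + (INR m + 1) * PI) with ((t + INR m * PI) + PI) by ring.
      rewrite zf_pi, IH1. ring.
    + assert (E : zf p3 q3 ((t - (INR m + 1) * PI) + PI) = 0).
      { replace ((t - (INR m + 1) * PI) + PI) with (t - INR m * PI) by ring. auto. }
      rewrite zf_pi in E. lra.
Qed.

Lemma zf_shift p3 q3 t (n : Z) : zf p3 q3 t = 0 -> zf p3 q3 (t + IZR n * PI) = 0.
Proof.
  intros H. destruct (Z.le_gt_cases 0 n) as [h|h].
  - rewrite <- (Znat.Z2Nat.id n) by auto. rewrite <- INR_IZR_INZ. apply zf_shift_nat; auto.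
  - replace n with (- Z.of_nat (Z.to_nat (- n)))%Z by lia.
    rewrite opp_IZR, <- INR_IZR_INZ.
    replace (t + - INR (Z.to_nat (- n)) * PI) with (t - INR (Z.to_nat (- n)) * PI) by ring.
    apply zf_shift_nat; auto.
Qed.

Lemma root_exists p3 q3 L : exists t0, L < t0 <= L + PI /\ p3 * cos t0 + q3 * sin t0 = 0.
Proof.
  pose proof PI_gt3.
  assert (Hr : exists r, zf p3 q3 r = 0).
  { destruct (Req_dec q3 0) as [h|h].
    - exists (PI/2). unfold zf. rewrite cos_PI2, h. ring.
    - exists (atan (- p3 / q3)). unfold zf.
      pose proof (atan_bound (- p3/q3)).
      pose proof (tan_atan (- p3 / q3)). unfold tan in H1.
      set (g := atan (- p3 / q3)) in *.
      assert (0 < cos g) by (apply cos_gt_0; lra).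
      assert (E : sin g = sin g / cos g * cos g) by (field; lra).
      rewrite H1 in E. rewrite E. field. auto. }
  destruct Hr as [r Hr].
  set (n := up ((L - r) / PI)).
  destruct (up_bounds ((L - r)/PI)) as [u1 u2]. fold n in u1, u2.
  exists (r + IZR n * PI). split; [split|].
  - apply (Rmult_lt_compat_r PI) in u1; [|lra].
    replace ((L - r) / PI * PI) with (L - r) in u1 by (field; lra). lra.
  - apply (Rmult_le_compat_r PI) in u2; [|lra].
    replace (((L - r) / PI + 1) * PI) with (L - r + PI) in u2 by (field; lra). lra.
  - apply zf_shift. auto.
Qed.

Lemma ray_data p q L : orthonormal p q ->
  exists t0 l c w3, L < t0 <= L + PI /\ c*c + w3*w3 = 1 /\
   forall (k : nat) tau, -(PI/2) < tau < PI/2 ->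
   ray p q (t0 + INR k * PI + tau)
   = sph (l + INR k * PI + atan (c * tan tau)) ((-1)^k * asin (w3 * sin tau)).
Proof.
  destruct p as [[p1 p2] p3], q as [[q1 q2] q3]. intros Ho.
  destruct (root_exists p3 q3 L) as [t0 [Ht0 Hz]].
  destruct (node_rep p1 p2 p3 q1 q2 q3 t0 Ho Hz) as [l [c [w3 [Hc Hr]]]].
  exists t0, l, c, w3. auto.
Qed.

Lemma omega_of_rep v a e p q t th k w3 tau : 0 < e < 1 -> w3 * w3 <= 1 ->
  ray p q t = sph th ((-1)^k * asin (w3 * sin tau)) ->
  Rabs tau < e -> hit a (th - v * t) -> in_omega v a e t (ray p q t).
Proof.
  intros He Hw Hr Ht [K HK]. pose proof PI_gt3.
  pose proof (asin_bound (w3 * sin tau)) as Hb.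
  assert (Habs : Rabs (asin (w3 * sin tau)) < e).
  { apply sin_lt_abs; [exact He | exact Hb | ].
    assert (-1 <= w3 * sin tau <= 1).
    { pose proof (SIN_bound tau). nra. }
    rewrite sin_asin by auto. rewrite Rabs_mult.
    pose proof (abs_lt_sin tau e He Ht).
    assert (Rabs w3 <= 1).
    { apply Rabs_le. nra. }
    pose proof (Rabs_pos (sin tau)). pose proof (Rabs_pos w3). nra. }
  assert (Hk : Rabs ((-1)^k * asin (w3 * sin tau)) = Rabs (asin (w3 * sin tau))).
  { rewrite Rabs_mult, pow_1_abs. ring. }
  exists th, ((-1)^k * asin (w3 * sin tau)). split; auto. split; [|split].
  - rewrite <- Hk in Habs. apply Rabs_def2 in Habs. lra.
  - rewrite Hk. auto.
  - exists K. lra.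
Qed.

Lemma T0_le v a e T : 0 < T -> GCC v a e T -> Rbar_le (T0 v a e) T.
Proof.
  intros HT HG. unfold T0. destruct (Glb_Rbar_correct (fun T => 0 < T /\ GCC v a e T)) as [H1 H2].
  apply H1. auto.
Qed.

Lemma T0_ge v a e L : (forall T, 0 < T -> GCC v a e T -> L <= T) -> Rbar_le L (T0 v a e).
Proof.
  intros H. unfold T0. destruct (Glb_Rbar_correct (fun T => 0 < T /\ GCC v a e T)) as [H1 H2].
  apply H2. intros x [h1 h2]. simpl. apply H; auto.
Qed.

Lemma T0_bounds v a e L T : 0 < T -> GCC v a e T ->
  (forall T, 0 < T -> GCC v a e T -> L <= T) ->
  is_finite (T0 v a e) /\ L <= real (T0 v a e) <= T.
Proof.
  intros HT HG HL. pose proof (T0_le v a e T HT HG). pose proof (T0_ge v a e L HL).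
  destruct (T0 v a e); simpl in *; try contradiction. split; [reflexivity|]. lra.
Qed.

Lemma T0_finite v a e T : 0 < T -> GCC v a e T -> is_finite (T0 v a e).
Proof.
  intros HT HG. apply (T0_bounds v a e 0 T HT HG). intros; lra.
Qed.

Lemma T0_inf v a e : (forall T, ~ GCC v a e T) -> T0 v a e = p_infty.
Proof.
  intros H. unfold T0. apply is_glb_Rbar_unique. split.
  - intros x [_ h]. exfalso. eapply H; eauto.
  - intros b Hb. destruct b; simpl; auto.
Qed.


Lemma part5 (q : Q) : 0 < Q2R q ->
  exists a0 eps0 : R, 0 < a0 /\ 0 < eps0 /\
    forall a eps : R, 0 < a < a0 -> 0 < eps < eps0 -> T0 (Q2R q) a eps = p_infty.
Proof.
  intros Hq. pose proof PI_gt3.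
  destruct q as [n dd]. unfold Q2R in *. simpl in *.
  set (D := IZR (Z.pos dd)).
  assert (HD : 0 < D) by (unfold D; apply IZR_lt; lia).
  set (v := IZR n * / D) in *.
  assert (Hv0 : 0 < v) by exact Hq.
  assert (H8 : 0 < 8 * D * v) by (apply Rmult_lt_0_compat; lra).
  exists (PI / (4 * D)), (Rmin (1/2) (PI / (8 * D * v))).
  assert (Hm : 0 < Rmin (1/2) (PI / (8 * D * v))).
  { apply Rmin_glb_lt; [lra|]. apply Rdiv_lt_0_compat; lra. }
  split; [apply Rdiv_lt_0_compat; lra|]. split; auto.
  intros a e Ha He.
  assert (He1 : e < 1/2) by (pose proof (Rmin_l (1/2) (PI / (8 * D * v))); lra).
  assert (He2 : e < PI / (8 * D * v)) by (pose proof (Rmin_r (1/2) (PI / (8 * D * v))); lra).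
  apply T0_inf. intros T HG.
  destruct (HG _ _ (polar_orth (PI / (2 * D)))) as [t [Ht Hom]].
  destruct (polar_hit v a e (PI / (2*D)) t t ltac:(lra) Hom) as [k [K [Hk HK]]].
  set (j := (k * Z.pos dd + 2 * K * Z.pos dd - n * k)%Z).
  assert (Ej : PI / (2 * D) + IZR k * PI + 2 * IZR K * PI - v * t
     = PI / (2 * D) + IZR j * PI / D - v * (t - IZR k * PI)).
  { unfold j, v. rewrite !minus_IZR, !plus_IZR, !mult_IZR. fold D. field. lra. }
  assert (Hv : Rabs (v * (t - IZR k * PI)) < PI / (8 * D)).
  { rewrite Rabs_mult, Rabs_pos_eq by lra.
    apply Rlt_le_trans with (v * e).
    - apply Rmult_lt_compat_l; lra.
    - apply (Rmult_le_reg_r (8 * D)); [lra|].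
      apply (Rmult_lt_compat_l v) in He2; [|lra].
      replace (v * (PI / (8 * D * v))) with (PI / (8 * D)) in He2 by (field; lra).
      replace (PI / (8 * D) * (8 * D)) with PI by (field; lra).
      apply (Rmult_lt_compat_r (8 * D)) in He2; [|lra].
      replace (PI / (8 * D) * (8 * D)) with PI in He2 by (field; lra). lra. }
  apply Rabs_def2 in Hv.
  assert (HPD : PI / (4 * D) = 2 * (PI / (8 * D))) by (field; lra).
  assert (HPD2 : PI / (2 * D) = 4 * (PI / (8 * D))) by (field; lra).
  assert (HPD3 : IZR j * PI / D = IZR j * (8 * (PI / (8 * D)))) by (field; lra).
  assert (P8 : 0 < PI / (8 * D)) by (apply Rdiv_lt_0_compat; lra).
  destruct (Z.le_gt_cases 0 j) as [hj|hj].
  - apply IZR_le in hj.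
    assert (0 <= IZR j * (8 * (PI / (8 * D)))) by (apply Rmult_le_pos; lra).
    lra.
  - assert (IZR j <= -1) by (apply IZR_le; lia).
    assert (IZR j * (8 * (PI / (8 * D))) <= - (8 * (PI / (8 * D)))) by nra.
    lra.
Qed.

Lemma lower_small v a e T : 0 < v -> 0 < e < 1 -> 0 < T -> GCC v a e T -> (PI - a) / v <= T.
Proof.
  intros Hv He HT HG. pose proof PI_gt3.
  destruct (HG _ _ (polar_orth 0)) as [t [Ht Hom]].
  destruct (polar_hit v a e 0 t t He Hom) as [k [K [_ HK]]].
  assert (E : 0 + IZR k * PI + 2 * IZR K * PI = IZR (k + 2 * K) * PI)
    by (rewrite plus_IZR, mult_IZR; ring).
  rewrite E in HK.
  destruct (Z.le_gt_cases (k + 2 * K) 0) as [h|h].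
  - apply IZR_le in h. nra.
  - assert (1 <= IZR (k + 2 * K)) by (apply IZR_le; lia).
    assert (PI - a < v * T) by nra.
    apply (Rmult_le_reg_r v); [lra|]. replace ((PI - a) / v * v) with (PI - a) by (field; lra). lra.
Qed.

Lemma lower_large v a e T : 0 < e < 1 -> 0 < T -> GCC v a e T -> PI - 2 * e <= T.
Proof.
  intros He HT HG. pose proof PI_gt3.
  destruct (HG _ _ (shift_orth 0 e)) as [t [Ht Hom]].
  rewrite shift_ray in Hom.
  destruct (polar_hit v a e 0 (t + e) t He Hom) as [k [K [Hk _]]].
  apply Rabs_def2 in Hk.
  destruct (Z.le_gt_cases k 0) as [h|h].
  - apply IZR_le in h. nra.
  - assert (1 <= IZR k) by (apply IZR_le; lia). nra.
Qed.


Definition Rep p q t0 l c w3 := forall (k : nat) tau, -(PI/2) < tau < PI/2 ->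
   ray p q (t0 + INR k * PI + tau)
   = sph (l + INR k * PI + atan (c * tan tau)) ((-1)^k * asin (w3 * sin tau)).

Lemma atan_le x y : x <= y -> atan x <= atan y.
Proof. intros [h|h]. left. apply atan_increasing; auto. subst; lra. Qed.

Lemma atan_ctan_bound c u : c * c <= 1 -> -(PI/2) < u < PI/2 ->
  Rabs (atan (c * tan u)) <= Rabs u.
Proof.
  intros Hc Hu.
  assert (Hcos : 0 < cos u) by (apply cos_gt_0; lra).
  assert (Hc1 : Rabs c <= 1) by (apply Rabs_le; nra).
  assert (Hb : atan (Rabs (tan u)) = Rabs u).
  { destruct (Rle_or_lt 0 u) as [h|h].
    - assert (0 <= tan u).
      { unfold tan. apply Rdiv_le_0_compat; auto. apply sin_ge_0; lra. }
      rewrite !Rabs_pos_eq by auto. apply atan_tan; lra.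
    - assert (tan u < 0).
      { unfold tan. apply Rdiv_neg_pos; auto. apply sin_lt_0_var; lra. }
      rewrite Rabs_left by auto. rewrite Rabs_left by auto.
      rewrite <- tan_neg. apply atan_tan; lra. }
  assert (Hct : Rabs (c * tan u) <= Rabs (tan u)).
  { rewrite Rabs_mult. pose proof (Rabs_pos (tan u)). nra. }
  apply Rabs_le. apply Rabs_le_between in Hct. destruct Hct as [h1 h2].
  split.
  - apply atan_le in h1. rewrite atan_opp, Hb in h1. lra.
  - apply atan_le in h2. rewrite Hb in h2. lra.
Qed.

Lemma cont_f (c v C X x : R) : -(PI/2) < x < PI/2 ->
  continuity_pt (fun t => C + atan (c * tan t) - v * (X + t)) x.
Proof.
  intros Hx.
  apply derivable_continuous_pt.
  apply derivable_pt_minus. apply derivable_pt_plus. apply derivable_pt_const.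
  apply (derivable_pt_comp (fun t => c * tan t) atan).
  apply derivable_pt_scal. apply derivable_pt_tan. lra.
  apply derivable_pt_atan.
  apply derivable_pt_scal. apply derivable_pt_plus. apply derivable_pt_const. apply derivable_pt_id.
Qed.

Lemma sweep_omega v a e p q t0 l c w3 (k : nat) u1 u2 :
  0 < a < 2 * PI -> 0 < e < 1 -> c*c + w3*w3 = 1 -> Rep p q t0 l c w3 ->
  -e < u1 -> u1 < u2 -> u2 < e -> 0 < t0 + INR k * PI + u1 ->
  2 * PI - a < (l + INR k * PI + atan (c * tan u1) - v * (t0 + INR k * PI + u1))
              - (l + INR k * PI + atan (c * tan u2) - v * (t0 + INR k * PI + u2)) ->
  exists t, t0 + INR k * PI + u1 <= t <= t0 + INR k * PI + u2 /\ in_omega v a e t (ray p q t).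
Proof.
  intros Ha He Hcw Hr H1 H12 H2 Ht Hd. pose proof PI_gt3.
  set (f := fun tau => (l + INR k * PI) + atan (c * tan tau) - v * ((t0 + INR k * PI) + tau)).
  destruct (sweep_hit a f u1 u2 Ha H12) as [x [Hx Hh]].
  - intros x Hx. apply cont_f. lra.
  - unfold f. lra.
  - exists (t0 + INR k * PI + x). split; [lra|].
    apply (omega_of_rep v a e p q _ (l + INR k * PI + atan (c * tan x)) k w3 x He).
    + nra.
    + apply Hr. lra.
    + apply Rabs_def1; lra.
    + unfold f in Hh. replace (l + INR k * PI + atan (c * tan x) - v * (t0 + INR k * PI + x))
        with (l + INR k * PI + atan (c * tan x) - v * (t0 + INR k * PI + x)) by ring. exact Hh.
Qed.

Lemma node_omega v a e p q t0 l c w3 (k : nat) :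
  0 < e < 1 -> c*c + w3*w3 = 1 -> Rep p q t0 l c w3 ->
  hit a (l + INR k * PI - v * (t0 + INR k * PI)) ->
  in_omega v a e (t0 + INR k * PI) (ray p q (t0 + INR k * PI)).
Proof.
  intros He Hcw Hr Hh. pose proof PI_gt3.
  replace (t0 + INR k * PI) with (t0 + INR k * PI + 0) by ring.
  apply (omega_of_rep v a e p q _ (l + INR k * PI + atan (c * tan 0)) k w3 0 He).
  - nra.
  - apply Hr. lra.
  - rewrite Rabs_R0. lra.
  - rewrite tan_0, Rmult_0_r, atan_0. replace (l + INR k * PI + 0 - v * (t0 + INR k * PI + 0))
      with (l + INR k * PI - v * (t0 + INR k * PI)) by ring. auto.
Qed.

Lemma get_data p q L : orthonormal p q ->
  exists t0 l c w3, L < t0 <= L + PI /\ c*c + w3*w3 = 1 /\ Rep p q t0 l c w3.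
Proof. intros H. destruct (ray_data p q L H) as [t0 [l [c [w3 [h1 [h2 h3]]]]]]. exists t0, l, c, w3. auto. Qed.

Lemma upper_v1 v a e : 0 < a < 2 * PI -> 0 < e < 1 -> (2 * PI - a + 2 * e) / (2 * e) < v ->
  GCC v a e (2 * PI + 2).
Proof.
  intros Ha He Hv. pose proof PI_gt3.
  assert (Hv1 : (2 * PI - a) / (2 * e) < v - 1).
  { replace ((2 * PI - a + 2 * e) / (2 * e)) with ((2 * PI - a) / (2 * e) + 1) in Hv by (field; lra). lra. }
  assert (Hv0 : 0 < v - 1).
  { assert (0 < (2 * PI - a) / (2 * e)) by (apply Rdiv_lt_0_compat; lra). lra. }
  set (X := (2 * PI - a) / (2 * (v - 1))).
  assert (HX : X < e).
  { unfold X. apply (Rmult_lt_reg_r (2 * (v - 1))); [lra|].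
    replace ((2 * PI - a) / (2 * (v - 1)) * (2 * (v - 1))) with (2 * PI - a) by (field; lra).
    apply (Rmult_lt_compat_r (2 * e)) in Hv1; [|lra].
    replace ((2 * PI - a) / (2 * e) * (2 * e)) with (2 * PI - a) in Hv1 by (field; lra). lra. }
  assert (HX0 : 0 < X) by (unfold X; apply Rdiv_lt_0_compat; lra).
  assert (HXe : 2 * (v - 1) * X = 2 * PI - a) by (unfold X; field; lra).
  set (eta := (e - X) / 2).
  intros p q Ho.
  destruct (get_data p q e Ho) as [t0 [l [c [w3 [Ht0 [Hcw Hr]]]]]].
  assert (Hc1 : c * c <= 1) by nra.
  destruct (sweep_omega v a e p q t0 l c w3 0 (-e + eta) (e - eta) Ha He Hcw Hr) as [t [Ht Hom]].
  - unfold eta; lra.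
  - unfold eta; lra.
  - unfold eta; lra.
  - simpl. unfold eta; lra.
  - pose proof (atan_ctan_bound c (-e + eta) Hc1 ltac:(unfold eta; lra)).
    pose proof (atan_ctan_bound c (e - eta) Hc1 ltac:(unfold eta; lra)).
    rewrite (Rabs_left (-e+eta)) in H0 by (unfold eta; lra).
    rewrite (Rabs_pos_eq (e - eta)) in H1 by (unfold eta; lra).
    apply Rabs_le_between in H0. apply Rabs_le_between in H1.
    assert (E : (v - 1) * (e - X) > 0) by (apply Rmult_lt_0_compat; lra).
    change (INR 0) with 0.
    match goal with |- _ < ?L - ?M => 
      replace (L - M) with (atan (c * tan (- e + eta)) - atan (c * tan (e - eta)) + v * (2 * (e - eta))) by ring end.
    replace (v * (2 * (e - eta))) with (v * (e + X)) by (unfold eta; field).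
    assert (A : v * (e + X) = (v - 1) * (e - X) + 2 * (v - 1) * X + (e + X)) by ring.
    rewrite A, HXe. assert (Heta : eta = (e - X) / 2) by reflexivity. clearbody eta X. clear - H0 H1 E Heta. lra.
  - exists t. change (INR 0) with 0 in Ht.
    assert (0 < eta) by (unfold eta; lra). split; [split; lra | auto].
Qed.


Lemma upper_small v a e : 0 < a < PI -> 0 < e < 1 -> 0 < v -> v < a / (2 * PI + 1) ->
  GCC v a e ((PI - a) / v + 4 * PI + 2).
Proof.
  intros Ha He Hv Hva. pose proof PI_gt3.
  assert (Hva' : (2 * PI + 1) * v < a).
  { apply (Rmult_lt_compat_l (2 * PI + 1)) in Hva; [|lra].
    replace ((2 * PI + 1) * (a / (2 * PI + 1))) with a in Hva by (field; lra). lra. }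
  intros p q Ho.
  destruct (get_data p q 0 Ho) as [t0 [l [c [w3 [Ht0 [Hcw Hr]]]]]].
  set (dl := (2 * PI + 1) * v).
  set (nn := (up ((l - dl) / PI) - 1)%Z).
  assert (Hnn : IZR nn * PI <= l - dl < IZR nn * PI + PI).
  { unfold nn. rewrite minus_IZR. destruct (up_bounds ((l - dl)/PI)) as [h1 h2].
    split.
    - assert (IZR (up ((l - dl) / PI)) - 1 <= (l - dl)/PI) by lra.
      apply (Rmult_le_compat_r PI) in H0; [|lra].
      replace ((l - dl) / PI * PI) with (l - dl) in H0 by (field; lra). lra.
    - apply (Rmult_lt_compat_r PI) in h1; [|lra].
      replace ((l - dl) / PI * PI) with (l - dl) in h1 by (field; lra). lra. }
  set (r := (nn mod 2)%Z). set (M' := (nn / 2)%Z).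
  assert (Hdm : nn = (2 * M' + r)%Z) by (unfold r, M'; apply Z.div_mod; lia).
  assert (Hr2 : (0 <= r < 2)%Z) by (unfold r; apply Z.mod_pos_bound; lia).
  assert (HrR : 0 <= IZR r <= 1) by (split; apply IZR_le; lia).
  set (rho := l - IZR nn * PI).
  assert (Hrho : dl <= rho < dl + PI) by (unfold rho; lra).
  set (L0 := Rmax 0 ((rho - a) / v)).
  assert (HL0 : 0 <= L0) by apply Rmax_l.
  assert (HL1 : (rho - a) / v <= L0) by apply Rmax_r.
  assert (HL2 : L0 = 0 \/ L0 = (rho - a) / v).
  { unfold L0, Rmax. destruct (Rle_dec 0 ((rho - a) / v)); auto. }
  set (x := (L0 - t0 - IZR r * PI) / (2 * PI)).
  set (j := Z.to_nat (up x)).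
  assert (Hj : x < INR j <= x + 1).
  { destruct (up_bounds x) as [h1 h2]. unfold j.
    destruct (Z.le_gt_cases 0 (up x)) as [h|h].
    - rewrite INR_to_nat by auto. lra.
    - replace (Z.to_nat (up x)) with 0%nat by lia. simpl.
      assert (IZR (up x) < 0) by (apply IZR_lt; lia). split; [lra|].
      unfold x. apply (Rmult_le_reg_r (2 * PI)); [lra|].
      replace (((L0 - t0 - IZR r * PI) / (2 * PI) + 1) * (2 * PI)) with (L0 - t0 - IZR r * PI + 2 * PI) by (field; lra).
      nra. }
  set (k := (Z.to_nat r + 2 * j)%nat).
  assert (Hk : INR k = IZR r + 2 * INR j).
  { unfold k. rewrite plus_INR, mult_INR, INR_to_nat by lia. simpl. ring. }
  set (t := t0 + INR k * PI).
  assert (Ht : L0 < t <= L0 + 2 * PI).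
  { unfold t. rewrite Hk. destruct Hj as [h1 h2]. unfold x in h1, h2.
    split.
    - apply (Rmult_lt_compat_r (2 * PI)) in h1; [|lra].
      replace ((L0 - t0 - IZR r * PI) / (2 * PI) * (2 * PI)) with (L0 - t0 - IZR r * PI) in h1 by (field; lra). lra.
    - apply (Rmult_le_compat_r (2 * PI)) in h2; [|lra].
      replace (((L0 - t0 - IZR r * PI) / (2 * PI) + 1) * (2 * PI)) with (L0 - t0 - IZR r * PI + 2 * PI) in h2 by (field; lra). lra. }
  assert (Hvt1 : rho - a < v * t).
  { assert (v * L0 < v * t) by (apply Rmult_lt_compat_l; lra).
    assert (rho - a <= v * L0).
    { apply (Rmult_le_compat_l v) in HL1; [|lra].
      replace (v * ((rho - a) / v)) with (rho - a) in HL1 by (field; lra). lra. }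
    lra. }
  assert (Hvt2 : v * t < rho).
  { assert (v * t <= v * L0 + 2 * PI * v) by nra.
    destruct HL2 as [h|h].
    - rewrite h in H0. unfold dl in Hrho. nra.
    - rewrite h in H0. replace (v * ((rho - a) / v)) with (rho - a) in H0 by (field; lra). nra. }
  exists t. split.
  - split; [lra|].
    assert (L0 <= (PI - a) / v + 2 * PI + 1).
    { destruct HL2 as [h|h]; rewrite h.
      - assert (0 <= (PI - a) / v) by (apply Rdiv_le_0_compat; lra). lra.
      - apply (Rmult_le_reg_r v); [lra|].
        replace ((rho - a) / v * v) with (rho - a) by (field; lra).
        replace (((PI - a) / v + 2 * PI + 1) * v) with (PI - a + (2 * PI + 1) * v) by (field; lra).
        unfold dl in Hrho. lra. }
    lra.
  - unfold t. apply (node_omega v a e p q t0 l c w3 k He Hcw Hr).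
    exists (- (M' + r) - Z.of_nat j)%Z.
    rewrite minus_IZR, opp_IZR, plus_IZR, <- INR_IZR_INZ.
    assert (Enn : IZR nn = 2 * IZR M' + IZR r) by (rewrite Hdm, plus_IZR, mult_IZR; ring).
    fold t.
    replace (l + INR k * PI - v * t + 2 * (- (IZR M' + IZR r) - INR j) * PI) with (rho - v * t).
    + lra.
    + unfold rho. rewrite Hk, Enn. ring.
Qed.

Lemma diff_lower a v l t0 c (k : nat) u1 u2 : 0 < a -> 3 * PI < v * (u2 - u1) ->
  2 * PI - a < (l + INR k * PI + atan (c * tan u1) - v * (t0 + INR k * PI + u1))
              - (l + INR k * PI + atan (c * tan u2) - v * (t0 + INR k * PI + u2)).
Proof.
  intros Ha H.
  replace ((l + INR k * PI + atan (c * tan u1) - v * (t0 + INR k * PI + u1))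
              - (l + INR k * PI + atan (c * tan u2) - v * (t0 + INR k * PI + u2)))
    with (atan (c * tan u1) - atan (c * tan u2) + v * (u2 - u1)) by ring.
  pose proof (atan_bound (c * tan u1)). pose proof (atan_bound (c * tan u2)). lra.
Qed.

Lemma upper_large a e w : 0 < a < 2 * PI -> 0 < e < 1 -> 0 < w ->
  exists V, forall v, V < v -> GCC v a e (PI - 2 * e + w).
Proof.
  intros Ha He Hw. pose proof PI_gt3.
  set (eta := Rmin (w / 4) e).
  assert (He1 : eta <= w / 4) by apply Rmin_l.
  assert (He2 : eta <= e) by apply Rmin_r.
  assert (He0 : 0 < eta) by (apply Rmin_glb_lt; lra).
  exists (12 * PI / eta). intros v Hv p q Ho.
  assert (Hv' : 3 * PI < v * (eta / 4)).
  { apply (Rmult_lt_compat_r (eta / 4)) in Hv; [|lra].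
    replace (12 * PI / eta * (eta / 4)) with (3 * PI) in Hv by (field; lra). lra. }
  destruct (get_data p q (- e) Ho) as [t0 [l [c [w3 [Ht0 [Hcw Hr]]]]]].
  destruct (Rle_or_lt e t0) as [hA1|hA].
  - destruct (sweep_omega v a e p q t0 l c w3 0 (-e + eta/4) (-e + eta/2) Ha He Hcw Hr)
      as [t [Ht Hom]];
    [lra|lra|lra|change (INR 0) with 0; lra
    |apply diff_lower; [lra|]; replace (- e + eta / 2 - (- e + eta / 4)) with (eta / 4) by field; lra
    |exists t; change (INR 0) with 0 in Ht; split; [lra|auto]].
  - destruct (Rle_or_lt eta (t0 + e)) as [hA2|hB].
    + destruct (sweep_omega v a e p q t0 l c w3 0 (-t0 + eta/4) (-t0 + eta/2) Ha He Hcw Hr)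
        as [t [Ht Hom]];
      [lra|lra|lra|change (INR 0) with 0; lra
      |apply diff_lower; [lra|]; replace (- t0 + eta / 2 - (- t0 + eta / 4)) with (eta / 4) by field; lra
      |exists t; change (INR 0) with 0 in Ht; split; [lra|auto]].
    + destruct (sweep_omega v a e p q t0 l c w3 1 (-e + eta/4) (-e + eta/2) Ha He Hcw Hr)
        as [t [Ht Hom]];
      [lra|lra|lra|change (INR 1) with 1; lra
      |apply diff_lower; [lra|]; replace (- e + eta / 2 - (- e + eta / 4)) with (eta / 4) by field; lra
      |exists t; change (INR 1) with 1 in Ht; split; [lra|auto]].
Qed.

Lemma p1core v a e (k1 : nat) (m1 : Z) : 0 < a < 2 * PI -> 0 < e < 1 ->
  0 < Rabs (INR k1 * PI * (1 - v) + 2 * IZR m1 * PI) < a ->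
  exists T, 0 < T /\ GCC v a e T.
Proof.
  intros Ha He Hd. pose proof PI_gt3.
  set (d := INR k1 * PI * (1 - v) + 2 * IZR m1 * PI) in *.
  destruct (hit_step a d ltac:(lra) Hd) as [J HJ].
  exists (PI + INR (J * k1) * PI + 1).
  assert (0 <= INR (J * k1)) by apply pos_INR.
  split; [nra|].
  intros p q Ho.
  destruct (get_data p q 0 Ho) as [t0 [l [c [w3 [Ht0 [Hcw Hr]]]]]].
  destruct (HJ (l - v * t0)) as [j [HjJ Hh]].
  exists (t0 + INR (j * k1) * PI). split.
  - assert (INR (j * k1) <= INR (J * k1)) by (apply le_INR; apply Nat.mul_le_mono_r; auto).
    assert (0 <= INR (j * k1)) by apply pos_INR.
    split; nra.
  - apply (node_omega v a e p q t0 l c w3 (j * k1) He Hcw Hr).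
    replace (l + INR (j * k1) * PI - v * (t0 + INR (j * k1) * PI))
      with ((l - v * t0 + INR j * d) - 2 * IZR (Z.of_nat j * m1) * PI).
    + apply hit_shift. auto.
    + unfold d. rewrite mult_IZR, <- INR_IZR_INZ, mult_INR. ring.
Qed.


Lemma ball_R (x y : R) (e : posreal) : Rabs (y - x) < e -> ball x e y.
Proof. intros H. exact H. Qed.
Lemma ball_R' (x y : R) (e : R) : ball x e y -> Rabs (y - x) < e.
Proof. intros H. exact H. Qed.

Definition fl (x : R) : Z := (up x - 1)%Z.
Lemma fl_bounds x : IZR (fl x) <= x < IZR (fl x) + 1.
Proof. unfold fl. rewrite minus_IZR. destruct (up_bounds x). lra. Qed.
Lemma fl_nonneg x : 0 <= x -> (0 <= fl x)%Z.
Proof. intros H. unfold fl. pose proof (up_pos x H). lia. Qed.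

Lemma dirichlet (al : R) (N : nat) : (1 <= N)%nat ->
  exists k1 : nat, (1 <= k1 <= N)%nat /\ exists m : Z, Rabs (INR k1 * al - IZR m) < 1 / INR N.
Proof.
  intros HN.
  assert (HNr : 1 <= INR N) by (apply (le_INR 1); auto).
  set (fr := fun k : nat => INR k * al - IZR (fl (INR k * al))).
  assert (Hfr : forall k, 0 <= fr k < 1).
  { intros k. unfold fr. pose proof (fl_bounds (INR k * al)). lra. }
  set (box := fun k : nat => Z.to_nat (fl (INR N * fr k))).
  assert (Hnn : forall k, (0 <= fl (INR N * fr k))%Z).
  { intros k. apply fl_nonneg. pose proof (Hfr k). nra. }
  assert (Hbox : forall k, (box k < N)%nat).
  { intros k. unfold box. pose proof (fl_bounds (INR N * fr k)). pose proof (Hfr k).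
    assert (INR N * fr k < INR N * 1) by (apply Rmult_lt_compat_l; lra).
    assert (IZR (fl (INR N * fr k)) < IZR (Z.of_nat N)) by (rewrite <- INR_IZR_INZ; lra).
    apply lt_IZR in H2. specialize (Hnn k).
    apply Znat.Nat2Z.inj_lt. rewrite Znat.Z2Nat.id by auto. exact H2. }
  assert (Hkey : forall k k', box k = box k' -> Rabs (fr k' - fr k) < 1 / INR N).
  { intros k k' Hb. unfold box in Hb.
    apply Znat.Z2Nat.inj in Hb; auto.
    pose proof (fl_bounds (INR N * fr k)). pose proof (fl_bounds (INR N * fr k')).
    rewrite Hb in H.
    assert (Rabs (INR N * (fr k' - fr k)) < 1) by (apply Rabs_def1; lra).
    rewrite Rabs_mult, Rabs_pos_eq in H1 by lra.
    apply (Rmult_lt_reg_l (INR N)); [lra|].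
    replace (INR N * (1 / INR N)) with 1 by (field; lra). auto. }
  destruct (classic (exists k k', (k < k' <= N)%nat /\ box k = box k')) as [[k [k' [Hkk Hb]]] | Hno].
  - exists (k' - k)%nat. split; [lia|].
    exists (fl (INR k' * al) - fl (INR k * al))%Z.
    rewrite minus_INR by lia. rewrite minus_IZR.
    replace ((INR k' - INR k) * al - (IZR (fl (INR k' * al)) - IZR (fl (INR k * al))))
      with (fr k' - fr k) by (unfold fr; ring).
    apply Hkey; auto.
  - exfalso.
    assert (HD : NoDup (map box (List.seq 0 (S N)))).
    { apply NoDup_map_NoDup_ForallPairs; [|apply seq_NoDup].
      intros x y Hx Hy Hb. apply in_seq in Hx. apply in_seq in Hy.
      destruct (Nat.lt_total x y) as [h|[h|h]]; auto.
      - exfalso. apply Hno. exists x, y. split; [lia|auto].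
      - exfalso. apply Hno. exists y, x. split; [lia|auto]. }
    assert (HI : incl (map box (List.seq 0 (S N))) (List.seq 0 N)).
    { intros z Hz. apply in_map_iff in Hz. destruct Hz as [x [Hx _]].
      apply in_seq. subst. pose proof (Hbox x). lia. }
    pose proof (NoDup_incl_length HD HI). rewrite length_map, !length_seq in H. lia.
Qed.

Theorem proposition3p1 :
  (forall a eps : R, 0 < a < 2 * PI -> 0 < eps < 1 ->
     (exists crit : list R, forall v : R, 0 < v -> ~ In v crit -> is_finite (T0 v a eps))
  /\ (a < PI ->
        (exists d : R, 0 < d /\ forall v, 0 < v < d -> is_finite (T0 v a eps))
        /\ filterlim (fun v => v * real (T0 v a eps) / (PI - a)) (at_right 0) (locally 1))
  /\ (forall v : R, (2 * PI - a + 2 * eps) / (2 * eps) < v -> is_finite (T0 v a eps))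
  /\ filterlim (fun v => real (T0 v a eps)) (Rbar_locally p_infty) (locally (PI - 2 * eps)))
  /\
  (forall q : Q, 0 < Q2R q ->
     exists a0 eps0 : R, 0 < a0 /\ 0 < eps0 /\
       forall a eps : R, 0 < a < a0 -> 0 < eps < eps0 -> T0 (Q2R q) a eps = p_infty).
Proof.
  split; [|exact part5].
  intros a e Ha He. pose proof PI_gt3.
  set (v1 := (2 * PI - a + 2 * e) / (2 * e)).
  assert (Hv1 : 1 < v1).
  { unfold v1. apply (Rmult_lt_reg_r (2 * e)); [lra|].
    replace ((2 * PI - a + 2 * e) / (2 * e) * (2 * e)) with (2 * PI - a + 2 * e) by (field; lra). lra. }
  assert (P3 : forall v, v1 < v -> is_finite (T0 v a e)).
  { intros v Hv. apply (T0_finite v a e (2 * PI + 2)); [lra|]. apply upper_v1; auto. }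
  split; [|split; [|split]].
  -
    set (N := Z.to_nat (up (2 * PI / a))).
    assert (HN : 2 * PI / a < INR N).
    { unfold N. destruct (up_bounds (2 * PI / a)).
      assert (0 <= 2 * PI / a) by (apply Rdiv_le_0_compat; lra).
      rewrite INR_to_nat; [lra|]. apply le_IZR. lra. }
    assert (HN1 : (1 <= N)%nat).
    { assert (0 < INR N) by (assert (0 < 2 * PI / a) by (apply Rdiv_lt_0_compat; lra); lra).
      assert (INR 0 < INR N) by (simpl; lra). apply INR_lt in H1. lia. }
    assert (HN0 : 0 < INR N) by (assert (0 < 2*PI/a) by (apply Rdiv_lt_0_compat; lra); lra).
    assert (HNa : 2 * PI / INR N < a).
    { apply (Rmult_lt_reg_r (INR N)); [lra|].
      replace (2 * PI / INR N * INR N) with (2 * PI) by (field; lra).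
      apply (Rmult_lt_compat_l a) in HN; [|lra].
      replace (a * (2 * PI / a)) with (2 * PI) in HN by (field; lra). lra. }
    set (Mz := Z.to_nat (up (INR N * v1))).
    assert (HMz : INR N * v1 < INR Mz).
    { unfold Mz. destruct (up_bounds (INR N * v1)).
      rewrite INR_to_nat; [lra|]. apply le_IZR.
      assert (0 <= INR N * v1) by (apply Rmult_le_pos; lra). lra. }
    exists (flat_map (fun n => map (fun i => 1 - 2 * (INR i - INR Mz) / INR n) (List.seq 0 (2 * Mz + 1))) (List.seq 1 N)).
    intros v Hv Hnot.
    destruct (Rlt_or_le v1 v) as [hv|hv]; [apply P3; auto|].
    destruct (dirichlet ((1 - v) / 2) N HN1) as [k1 [Hk1 [m Hm]]].
    assert (Hk1r : 1 <= INR k1 <= INR N) by (split; [apply (le_INR 1)|apply le_INR]; lia).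
    destruct (Req_dec (INR k1 * ((1 - v) / 2) - IZR m) 0) as [h0|h0].
    + exfalso. apply Hnot. apply in_flat_map. exists k1. split.
      * apply in_seq. lia.
      * apply in_map_iff.
        assert (Hm1 : IZR m < INR Mz).
        { assert (IZR m < INR k1 / 2) by nra. nra. }
        assert (Hm2 : - INR Mz < IZR m).
        { assert (IZR m = INR k1 * ((1 - v) / 2)) by lra.
          assert (INR k1 * (1 - v1) / 2 <= IZR m) by nra. nra. }
        assert (Hmz : (0 <= m + Z.of_nat Mz)%Z).
        { rewrite INR_IZR_INZ in Hm2. apply le_IZR. rewrite plus_IZR. lra. }
        exists (Z.to_nat (m + Z.of_nat Mz)). split.
        -- rewrite INR_to_nat by auto. rewrite plus_IZR, <- INR_IZR_INZ.
           replace (IZR m + INR Mz - INR Mz) with (IZR m) by ring.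
           apply (Rmult_eq_reg_r (INR k1)); [|lra].
           replace ((1 - 2 * IZR m / INR k1) * INR k1) with (INR k1 - 2 * IZR m) by (field; lra).
           nra.
        -- apply in_seq. rewrite INR_IZR_INZ in Hm1. apply lt_IZR in Hm1. lia.
      destruct (p1core v a e k1 (- m) Ha He) as [T [HT HG]].
      * rewrite opp_IZR.
        replace (INR k1 * PI * (1 - v) + 2 * - IZR m * PI) with (2 * PI * (INR k1 * ((1 - v) / 2) - IZR m)) by field.
        rewrite Rabs_mult, (Rabs_pos_eq (2 * PI)) by lra.
        split.
        -- apply Rmult_lt_0_compat; [lra|]. apply Rabs_pos_lt. auto.
        -- apply Rle_lt_trans with (2 * PI * (1 / INR N)).
           ++ apply Rmult_le_compat_l; lra.
           ++ replace (2 * PI * (1 / INR N)) with (2 * PI / INR N) by (field; lra). lra.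
      * apply (T0_finite v a e T); auto.
  -
    intros HaPI.
    set (d := a / (2 * PI + 1)).
    assert (Hd : 0 < d) by (apply Rdiv_lt_0_compat; lra).
    assert (Hb : forall v, 0 < v < d -> is_finite (T0 v a e) /\
       (PI - a) / v <= real (T0 v a e) <= (PI - a) / v + 4 * PI + 2).
    { intros v Hv.
      assert (0 < (PI - a) / v) by (apply Rdiv_lt_0_compat; lra).
      apply T0_bounds.
      - lra.
      - apply upper_small; [split; lra | split; lra | lra | unfold d in *; lra].
      - intros T HT HG. apply (lower_small v a e T); [lra | exact He | exact HT | exact HG]. }
    split.
    + exists d. split; auto. intros v Hv. apply Hb; auto.
    + apply filterlim_locally. intros epsp.
      set (C := 4 * PI + 2).
      assert (HC : 0 < C) by (unfold C; lra).
      assert (Hdel : 0 < Rmin d (epsp * (PI - a) / C)).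
      { apply Rmin_glb_lt; auto. apply Rdiv_lt_0_compat; [|lra].
        apply Rmult_lt_0_compat; [apply cond_pos|lra]. }
      exists (mkposreal _ Hdel). intros y Hy Hy0. simpl in Hy.
      apply ball_R' in Hy. rewrite Rminus_0_r, Rabs_pos_eq in Hy by lra.
      assert (Hy1 : y < d) by (pose proof (Rmin_l d (epsp * (PI - a) / C)); lra).
      assert (Hy2 : y < epsp * (PI - a) / C) by (pose proof (Rmin_r d (epsp * (PI - a) / C)); lra).
      destruct (Hb y (conj Hy0 Hy1)) as [_ [B1 B2]].
      apply ball_R.
      assert (E1 : 1 <= y * real (T0 y a e) / (PI - a)).
      { apply (Rmult_le_reg_r (PI - a)); [lra|].
        replace (y * real (T0 y a e) / (PI - a) * (PI - a)) with (y * real (T0 y a e)) by (field; lra).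
        apply (Rmult_le_compat_l y) in B1; [|lra].
        replace (y * ((PI - a) / y)) with (PI - a) in B1 by (field; lra). lra. }
      assert (E2 : y * real (T0 y a e) / (PI - a) < 1 + epsp).
      { apply (Rmult_lt_reg_r (PI - a)); [lra|].
        replace (y * real (T0 y a e) / (PI - a) * (PI - a)) with (y * real (T0 y a e)) by (field; lra).
        apply (Rmult_le_compat_l y) in B2; [|lra].
        replace (y * ((PI - a) / y + 4 * PI + 2)) with (PI - a + y * C) in B2 by (unfold C; field; lra).
        apply (Rmult_lt_compat_r C) in Hy2; [|lra].
        replace (epsp * (PI - a) / C * C) with (epsp * (PI - a)) in Hy2 by (field; lra).
        lra. }
      apply Rabs_def1; lra.
  - exact P3.
  - apply filterlim_locally. intros epsp.
    destruct (upper_large a e (epsp / 2) Ha He) as [V HV].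
    { pose proof (cond_pos epsp). lra. }
    exists V. intros v Hv.
    destruct (T0_bounds v a e (PI - 2 * e) (PI - 2 * e + epsp / 2)) as [_ [B1 B2]].
    + pose proof (cond_pos epsp). lra.
    + apply HV; auto.
    + intros T HT HG. apply (lower_large v a e T); auto.
    + apply ball_R. pose proof (cond_pos epsp). apply Rabs_def1; lra.
Qed.
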